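(* Let $\mathcal F,\mathcal G$ be weighted species with coefficients $f_n=[z^n]\mathcal F(z)$ and $g_n=[z^n]\mathcal G(z)$, both positive for all sufficiently large $n$. Suppose $\mathcal G$ has radius of convergence $\rho_{\mathcal G}\in(0,\infty)$, that $g_n/g_{n+1}\to\rho_{\mathcal G}$ and $\frac1{g_n}\sum_{i+j=n}g_ig_j\to2\mathcal G(\rho_{\mathcal G})<\infty$, and that $f_n=o(g_n)$. Let $\mathsf S_n$ be an $n$-sized $\mathcal F\mathcal G$-structure (on label set $\{1,\dots,n\}$) drawn with probability proportional to its weight. Then $$[z^n]\mathcal F(z)\mathcal G(z)\sim\mathcal F(\rho_{\mathcal G})\,g_n,$$ and the $\mathcal F$-component of $\mathsf S_n$, relabelled order-preservingly onto $\{1,\dots,|\cdot|\}$, converges in distribution to a Boltzmann distributed $\mathcal F$-object with parameter $\rho_{\mathcal G}$.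
   Context: A weighted species $\mathcal F$ assigns to each finite set $U$ a finite set $\mathcal F[U]$ of structures, each with a nonnegative weight, compatibly with relabelling along bijections; $[z^n]\mathcal F(z)$ is $1/n!$ times the total weight of $\mathcal F[\{1,\dots,n\}]$ and $\mathcal F(z)$ is the exponential generating series. An $\mathcal F\mathcal G$-structure on $U$ is a pair consisting of an $\mathcal F$-structure on $U_1$ and a $\mathcal G$-structure on $U_2$ with $U=U_1\sqcup U_2$, weight the product; its components are the two parts. For $\rho>0$ with $\mathcal F(\rho)<\infty$, the Boltzmann distribution with parameter $\rho$ selects $F\in\mathcal F[\{1,\dots,m\}]$, $m\ge0$, with probability $\omega(F)\rho^m/(m!\,\mathcal F(\rho))$, $\omega(F)$ the weight. *)

(* Defs.v *)
From mathcomp Require Import all_boot.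
From Stdlib Require Import Reals.
Set Implicit Arguments.
Unset Strict Implicit.
Unset Printing Implicit Defensive.

Open Scope R_scope.

(* A weighted species F is represented by its structures on the canonical
   label sets [n] = 'I_n : a finite type [Fs n] of F-structures on 'I_n and a
   weight function [w n : Fs n -> R] (nonnegativity is a hypothesis of the
   theorem).  Structures on an arbitrary finite set U are transported to
   'I_|U| by the order-preserving bijection. *)

Definition rsum (T : finType) (f : T -> R) : R := \big[Rplus/0]_(x : T) f x.

Definition egf_coef (Fs : nat -> finType) (w : forall n, Fs n -> R) (n : nat) : R :=
  rsum (w n) / INR (Factorial.fact n).

Definition cauchy_coef (a b : nat -> R) (n : nat) : R :=
  sum_f_R0 (fun k => a k * b (n - k)%nat) n.

Definition series_value (a : nat -> R) (x v : R) : Prop :=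
  infinite_sum (fun n => a n * x ^ n) v.

Definition radius_of_convergence (a : nat -> R) (r : R) : Prop :=
  (forall x, Rabs x < r -> exists v, series_value a x v) /\
  (forall x, r < Rabs x -> ~ (exists v, series_value a x v)).

(* Expectation of a test function h of the (order-preservingly relabelled)
   F-component of a random FG-structure S_n on 'I_n drawn with probability
   proportional to its weight.  An FG-structure on 'I_n is a triple
   (U, x, y) with U the label set of the F-part, x an F-structure on U
   (represented on 'I_#|U|), y a G-structure on the complement ~: U
   (represented on 'I_#|~:U|); its weight is wF x * wG y. *)
Definition FG_total_weight (Fs Gs : nat -> finType)
  (wF : forall n, Fs n -> R) (wG : forall n, Gs n -> R) (n : nat) : R :=
  rsum (fun U : {set 'I_n} =>
    rsum (fun x : Fs #|U| => rsum (fun y : Gs #|~: U| => wF _ x * wG _ y))).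

Definition Fcomponent_expectation (Fs Gs : nat -> finType)
  (wF : forall n, Fs n -> R) (wG : forall n, Gs n -> R)
  (h : forall m, Fs m -> R) (n : nat) : R :=
  rsum (fun U : {set 'I_n} =>
    rsum (fun x : Fs #|U| => rsum (fun y : Gs #|~: U| =>
      wF _ x * wG _ y * h _ x)))
  / FG_total_weight wF wG n.

(* Expectation of h under the Boltzmann distribution with parameter rho,
   where Fval = F(rho): F in F[{1..m}] has probability
   w(F) rho^m / (m! F(rho)).  [v] is the value of the (convergent) series. *)
Definition boltzmann_expectation (Fs : nat -> finType) (w : forall n, Fs n -> R)
  (rho Fval : R) (h : forall m, Fs m -> R) (v : R) : Prop :=
  infinite_sum
    (fun m => rsum (fun x : Fs m => h m x * (w m x * rho ^ m / (INR (Factorial.fact m) * Fval))))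
    v.

(* Convergence in distribution (on the discrete countable space of all
   F-structures on some [m]) of the F-component of S_n to the Boltzmann
   distribution: E h(X_n) -> E h(X) for every bounded test function h. *)
Definition Fcomponent_converges_to_boltzmann (Fs Gs : nat -> finType)
  (wF : forall n, Fs n -> R) (wG : forall n, Gs n -> R) (rho Fval : R) : Prop :=
  forall h : forall m, Fs m -> R,
    (exists M, forall m (x : Fs m), Rabs (h m x) <= M) ->
    exists v, boltzmann_expectation wF rho Fval h v /\
      Un_cv (Fcomponent_expectation wF wG h) v.

(* Main.v *)
Require Import Defs.
From Stdlib Require Import Reals Lra.
From Coquelicot Require Import Coquelicot.
From mathcomp Require Import all_boot zify.
Open Scope R_scope.

Lemma cv_ext_ev (u v : nat -> R) l :
  (exists N, forall n, (N <= n)%coq_nat -> u n = v n) -> Un_cv u l -> Un_cv v l.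
Proof.
move=> [N HN] Hu eps Heps; have [M HM] := Hu eps Heps.
exists (Nat.max N M) => n Hn; rewrite -HN; last lia.
apply: HM; lia.
Qed.

Lemma cv_shift (u : nat -> R) l j : Un_cv u l -> Un_cv (fun n => u (n - j)%nat) l.
Proof.
move=> Hu eps Heps; have [M HM] := Hu eps Heps.
exists (M + j)%nat => n Hn; apply: HM; lia.
Qed.

Lemma cv_sum (u : nat -> nat -> R) (l : nat -> R) K :
  (forall k, Un_cv (u k) (l k)) ->
  Un_cv (fun n => sum_f_R0 (fun k => u k n) K) (sum_f_R0 l K).
Proof.
move=> H; elim: K => [|K IH] /=; first exact: H.
exact: CV_plus IH (H K.+1).
Qed.

Lemma cv_const (c : R) : Un_cv (fun _ => c) c.
Proof. move=> eps Heps; exists 0%nat => n _; rewrite /R_dist Rminus_diag Rabs_R0; lra. Qed.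

Lemma cv_smallo (u v : nat -> R) M :
  (exists N, forall n, (N <= n)%coq_nat -> Rabs (u n) <= M * Rabs (v n)) ->
  Un_cv v 0 -> Un_cv u 0.
Proof.
move=> [N HN] Hv eps Heps.
have HM1 : 0 < Rabs M + 1 by move: (Rabs_pos M); lra.
have [K HK] := Hv (eps / (Rabs M + 1)) (Rdiv_lt_0_compat _ _ Heps HM1).
exists (Nat.max N K) => n Hn.
have := HK n ltac:(lia); have := HN n ltac:(lia).
rewrite /R_dist !Rminus_0_r => H1 H2.
have H3 : M * Rabs (v n) <= (Rabs M + 1) * Rabs (v n).
  apply: Rmult_le_compat_r; first exact: Rabs_pos.
  move: (RRle_abs M); lra.
have H4 : (Rabs M + 1) * Rabs (v n) < (Rabs M + 1) * (eps / (Rabs M + 1)).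
  exact: Rmult_lt_compat_l.
have H5 : (Rabs M + 1) * (eps / (Rabs M + 1)) = eps by field; lra.
lra.
Qed.

Section Key.
Variables (g : nat -> R) (rho L : R) (Ng : nat).
Hypothesis g_nonneg : forall n, 0 <= g n.
Hypothesis g_pos : forall n, (Ng <= n)%coq_nat -> 0 < g n.
Hypothesis rho_pos : 0 < rho.
Hypothesis ratio : Un_cv (fun n => g n / g (S n)) rho.
Hypothesis conv : Un_cv (fun n => cauchy_coef g g n / g n) L.

Lemma ratio_pow k : Un_cv (fun n => g (n - k)%nat / g n) (rho ^ k).
Proof.
elim: k => [|k IH].
  apply: (cv_ext_ev (fun _ => 1)); last exact: cv_const.
  exists Ng => n Hn; rewrite subn0 /Rdiv Rinv_r //.
  by apply: Rgt_not_eq; apply: g_pos.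
have H := CV_mult _ _ _ _ (cv_shift _ _ k.+1 ratio) IH.
rewrite /= -[rho * rho ^ k]/(rho ^ k.+1) in H.
apply: cv_ext_ev H; exists (Ng + k.+1)%nat => n Hn.
have -> : (S (n - k.+1) = n - k)%nat by lia.
have Hp : 0 < g (n - k)%nat by apply: g_pos; lia.
rewrite /Rdiv; field; split; [apply: Rgt_not_eq; apply: g_pos; lia | exact: Rgt_not_eq].
Qed.

Lemma key (a : nat -> R) (A : R) :
  Un_cv (fun n => a n / g n) 0 ->
  infinite_sum (fun n => a n * rho ^ n) A ->
  Un_cv (fun n => cauchy_coef a g n / g n) A.
Proof.
move=> Hag HA eps Heps.
pose C := Rabs L + 1.
have HC : 0 < C by rewrite /C; move: (Rabs_pos L); lra.
have [N1 HN1] := conv 1 Rlt_0_1.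
pose d := eps / (3 * C).
have Hd : 0 < d by rewrite /d; apply: Rdiv_lt_0_compat; lra.
have HdC : d * C = eps / 3 by rewrite /d; field; lra.
have [K0 HK0] := Hag d Hd.
have [K1 HK1] := HA (eps/3) ltac:(lra).
pose K := (K0 + K1 + Ng)%nat.
have Hs := cv_sum (fun k n => a k * (g (n - k)%nat / g n)) (fun k => a k * rho ^ k) K
  (fun k => CV_mult _ _ _ _ (cv_const (a k)) (ratio_pow k)).
have [N2 HN2] := Hs (eps/3) ltac:(lra).
exists (N1 + N2 + K.+1 + Ng)%nat => n Hn.
have Hgn : 0 < g n by apply: g_pos; lia.
have Hconv : cauchy_coef g g n / g n <= C.
  have := HN1 n ltac:(lia); rewrite /R_dist /C => H.
  move: (Rle_abs (cauchy_coef g g n / g n - L)) (RRle_abs L); lra.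
have Hsplit : forall b : nat -> R, cauchy_coef b g n =
   sum_f_R0 (fun k => b k * g (n - k)%nat) K +
   sum_f_R0 (fun i => b (K.+1 + i)%nat * g (n - (K.+1 + i))%nat) (n - K.+1).
  by move=> b; rewrite /cauchy_coef (tech2 _ K n) //; lia.
rewrite /R_dist Hsplit.
set head := sum_f_R0 (fun k => a k * g (n - k)%nat) K.
set tail := sum_f_R0 (fun i => a (K.+1 + i)%nat * g (n - (K.+1 + i))%nat) (n - K.+1).
have Hhead : head / g n = sum_f_R0 (fun k => a k * (g (n - k)%nat / g n)) K.
  rewrite /head /Rdiv (Rmult_comm (sum_f_R0 _ K)) scal_sum; apply PartSum.sum_eq; intros; ring.
have Hbd : forall m, (K <= m)%coq_nat -> Rabs (a m) <= d * g m.
  move=> m Hm; have := HK0 m ltac:(lia); rewrite /R_dist Rminus_0_r => H.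
  have Hgm : 0 < g m by apply: g_pos; lia.
  have -> : a m = (a m / g m) * g m by field; lra.
  rewrite Rabs_mult (Rabs_right (g m)); last lra.
  apply: Rmult_le_compat_r; lra.
have Htail : Rabs tail <= d * cauchy_coef g g n.
  apply: Rle_trans (sum_f_R0_triangle _ _) _.
  rewrite (Hsplit g) Rmult_plus_distr_l.
  have H0 : 0 <= d * sum_f_R0 (fun k => g k * g (n - k)%nat) K.
    apply: Rmult_le_pos; first lra.
    apply: cond_pos_sum => k; apply: Rmult_le_pos; apply: g_nonneg.
  suff : sum_f_R0 (fun i => Rabs (a (K.+1 + i)%nat * g (n - (K.+1 + i))%nat)) (n - K.+1)
     <= d * sum_f_R0 (fun i => g (K.+1 + i)%nat * g (n - (K.+1 + i))%nat) (n - K.+1) by lra.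
  rewrite scal_sum; apply: sum_Rle => i Hi.
  rewrite Rabs_mult (Rabs_right (g _)); last exact: Rle_ge (g_nonneg _).
  have := Hbd (K.+1 + i)%nat ltac:(lia).
  have := g_nonneg (n - (K.+1 + i))%nat.
  move=> H1 H2.
  have := Rmult_le_compat_r _ _ _ H1 H2; lra.
have Htail' : Rabs (tail / g n) <= eps / 3.
  rewrite -HdC /Rdiv Rabs_mult (Rabs_right (/ g n)); last first.
    by apply: Rle_ge; apply: Rlt_le; apply: Rinv_0_lt_compat.
  have Hi : 0 < / g n by apply: Rinv_0_lt_compat.
  apply: Rle_trans (Rmult_le_compat_r _ _ _ (Rlt_le _ _ Hi) Htail) _.
  rewrite Rmult_assoc; apply: Rmult_le_compat_l; lra.
have E : (head + tail) / g n - A =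
   (head / g n - sum_f_R0 (fun k => a k * rho ^ k) K)
   + (sum_f_R0 (fun k => a k * rho ^ k) K - A) + tail / g n by field; lra.
rewrite E Hhead.
have := HN2 n ltac:(lia); have := HK1 K ltac:(lia); rewrite /R_dist => H1 H2.
apply: Rle_lt_trans (Rabs_triang _ _) _.
apply: Rle_lt_trans (Rplus_le_compat_r _ _ _ (Rabs_triang _ _)) _.
lra.
Qed.

End Key.

Lemma series_ex (a g : nat -> R) (rho G : R) (Ng : nat) :
  (forall n, 0 <= g n) -> (forall n, (Ng <= n)%coq_nat -> 0 < g n) -> 0 < rho ->
  Un_cv (fun n => a n / g n) 0 ->
  infinite_sum (fun n => g n * rho ^ n) G ->
  exists A, infinite_sum (fun n => a n * rho ^ n) A.
Proof.
move=> g0 gp rp Hag HG.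
have [K HK] := Hag 1 Rlt_0_1.
pose M := (K + Ng)%nat.
have Hexg : ex_series (fun n => g n * rho ^ n) by exists G; apply/is_series_Reals.
suff : ex_series (fun n => a n * rho ^ n).
  by move=> [l Hl]; exists l; apply/is_series_Reals.
apply: ex_series_Rabs.
apply/(ex_series_incr_n _ M).
apply: (ex_series_le _ (fun k => g (M + k)%nat * rho ^ (M + k))).
  move=> k; rewrite /norm /= /abs /= Rabs_Rabsolu Rabs_mult (Rabs_right (rho ^ _)); last first.
    by apply: Rle_ge; apply: pow_le; lra.
  apply: Rmult_le_compat_r; first by apply: pow_le; lra.
  have Hgk : 0 < g (M + k)%nat by apply: gp; lia.
  have := HK (M + k)%nat ltac:(lia); rewrite /R_dist Rminus_0_r => H.
  have -> : a (M + k)%nat = (a (M + k)%nat / g (M + k)%nat) * g (M + k)%nat by field; lra.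
  rewrite Rabs_mult (Rabs_right (g _)); last lra.
  have := Rmult_le_compat_r _ _ _ (Rlt_le _ _ Hgk) (Rlt_le _ _ H); lra.
exact: (proj1 (ex_series_incr_n (fun n => g n * rho ^ n) M) Hexg).
Qed.

Lemma series_pos (f : nat -> R) (rho F : R) (N : nat) :
  (forall n, 0 <= f n) -> 0 < f N -> 0 < rho ->
  infinite_sum (fun n => f n * rho ^ n) F -> 0 < F.
Proof.
move=> f0 fN rp HF.
have Hg : Un_growing (sum_f_R0 (fun n => f n * rho ^ n)).
  move=> n; rewrite tech5; have := Rmult_le_pos _ _ (f0 n.+1) (pow_le rho n.+1 (Rlt_le _ _ rp)); lra.
have := growing_ineq _ _ Hg HF N.
have Ht : 0 < f N * rho ^ N by apply: Rmult_lt_0_compat => //; apply: pow_lt.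
case: N fN Ht => [|m] fN Ht; [move: Ht; simpl; lra | rewrite tech5].
have := cond_pos_sum (fun n => f n * rho ^ n) m
  (fun n => Rmult_le_pos _ _ (f0 n) (pow_le rho n (Rlt_le _ _ rp))).
lra.
Qed.

From mathcomp Require Import all_order all_algebra Rstruct ring.
Import Order.TTheory GRing.Theory Num.Theory.
Local Open Scope ring_scope.

Lemma sumsets (n : nat) (phi : nat -> R) :
  \sum_(U : {set 'I_n}) phi #|U| = \sum_(k < n.+1) 'C(n,k)%:R * phi k.
Proof.
rewrite (partition_big (fun U : {set 'I_n} => (inord #|U| : 'I_n.+1)) xpredT) //=.
apply: eq_bigr => k _.
have cardU : forall U : {set 'I_n}, (#|U| < n.+1)%N.
  by move=> U; rewrite ltnS; have := max_card (mem U); rewrite card_ord.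
transitivity (\sum_(U in [set U : {set 'I_n} | #|U| == k]) phi k).
  apply: eq_big => U.
    rewrite inE; apply/eqP/eqP => [<-|H]; first by rewrite inordK.
    by apply: val_inj; rewrite /= -H inordK.
  move=> /eqP <-; by rewrite inordK.
by rewrite sumr_const card_draws card_ord mulr_natl.
Qed.

Lemma sum_f_R0_big (f : nat -> R) n : sum_f_R0 f n = \sum_(k < n.+1) f k.
Proof.
elim: n => [|n IH] /=; first by rewrite big_ord_recr big_ord0 /= add0r.
by rewrite IH [in RHS]big_ord_recr /= RplusE.
Qed.

Lemma fact_neq0 k : (INR (Factorial.fact k) : R) != 0.
Proof. by rewrite INRE factE pnatr_eq0 -lt0n fact_gt0. Qed.

Lemma numer (Fs Gs : nat -> finType) (wF : forall n, Fs n -> R) (wG : forall n, Gs n -> R)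
  (h : forall m, Fs m -> R) (n : nat) :
  rsum (fun U : {set 'I_n} =>
    rsum (fun x : Fs #|U| => rsum (fun y : Gs #|~: U| =>
      wF _ x * wG _ y * h _ x)))
  = INR (Factorial.fact n) * cauchy_coef
       (fun k => rsum (fun x : Fs k => wF k x * h k x) / INR (Factorial.fact k))
       (egf_coef wG) n.
Proof.
pose Phi p q := rsum (fun x : Fs p => rsum (fun y : Gs q => wF _ x * wG _ y * h _ x)).
transitivity (\sum_(U : {set 'I_n}) Phi #|U| (n - #|U|)%N).
  apply: eq_bigr => U _; rewrite /Phi.
  have -> : (n - #|U| = #|~: U|)%N by have E := cardsC U; rewrite card_ord in E; rewrite -[X in (X - _)%N]E addKn.
  by [].
rewrite (sumsets n (fun k => Phi k (n - k)%N)) /cauchy_coef sum_f_R0_big mulr_sumr.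
apply: eq_bigr => k _.
have kn : (k <= n)%N by rewrite -ltnS.
have PhiE : Phi k (n - k)%N = (\sum_(x : Fs k) wF _ x * h _ x) * (\sum_(y : Gs (n-k)%N) wG _ y).
  rewrite mulr_suml; apply: eq_bigr => x _; rewrite mulr_sumr; apply: eq_bigr => y _.
  by rewrite mulrAC.
rewrite PhiE /egf_coef /rsum !RdivE !RmultE !INRE !factE.
have H1 := fact_neq0 k; have H2 := fact_neq0 (n-k); rewrite !INRE !factE in H1 H2.
rewrite -(bin_fact kn) !natrM.
field.
by rewrite H1 H2.
Qed.

Lemma rsum_abs_bound (T : finType) (w hh : T -> R) (M : R) :
  (forall x, Rle 0 (w x)) -> (forall x, Rle (Rabs (hh x)) M) ->
  Rle (Rabs (rsum (fun x => w x * hh x))) (M * rsum w).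
Proof.
move=> w0 hM; apply/RleP; rewrite RabsE /rsum ?RmultE.
apply: le_trans (ler_norm_sum _ _ _) _.
rewrite mulr_sumr; apply: ler_sum => x _.
have /RleP w0x := w0 x; have /RleP hx := hM x; rewrite RabsE in hx.
by rewrite normrM ger0_norm // mulrC ler_wpM2r.
Qed.

Lemma rsum_scale (T : finType) (w hh : T -> R) (c : R) :
  rsum (fun x => hh x * (w x * c)) = rsum (fun x => w x * hh x) * c.
Proof.
rewrite /rsum ?RmultE mulr_suml; apply: eq_bigr => x _.
by rewrite ?RmultE mulrA [hh x * w x]mulrC.
Qed.

Lemma rsum_ge0 (T : finType) (w : T -> R) : (forall x, Rle 0 (w x)) -> Rle 0 (rsum w).
Proof.
move=> w0; apply/RleP; rewrite /rsum; apply: sumr_ge0 => x _; exact/RleP.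
Qed.

Lemma FG_total_eq (Fs Gs : nat -> finType) (wF : forall n, Fs n -> R) (wG : forall n, Gs n -> R) n :
  FG_total_weight wF wG n = INR (Factorial.fact n) * cauchy_coef (egf_coef wF) (egf_coef wG) n.
Proof.
rewrite /FG_total_weight.
have -> : cauchy_coef (egf_coef wF) (egf_coef wG) n =
   cauchy_coef (fun k => rsum (fun x : Fs k => wF k x * (fun m (_ : Fs m) => 1) k x) / INR (Factorial.fact k))
       (egf_coef wG) n.
  rewrite /cauchy_coef !sum_f_R0_big; apply: eq_bigr => k _.
  by rewrite /egf_coef /rsum; congr (_ * _); congr (_ / _); apply: eq_bigr => x _; rewrite ?RmultE mulr1.
rewrite -numer /rsum; apply: eq_bigr => U _; apply: eq_bigr => x _; apply: eq_bigr => y _.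
by rewrite ?RmultE mulr1.
Qed.

Lemma rsum_scale2 (T : finType) (w hh : T -> R) (c e : R) :
  rsum (fun x => Rmult (hh x) (Rdiv (Rmult (w x) c) e)) =
  Rdiv (Rmult (rsum (fun x => Rmult (w x) (hh x))) c) e.
Proof.
rewrite /rsum !RdivE !RmultE -mulrA mulr_suml; apply: eq_bigr => x _.
by rewrite ?RdivE ?RmultE; ring.
Qed.

Close Scope ring_scope.
Open Scope R_scope.

Theorem proposition5
  (Fs Gs : nat -> finType)
  (wF : forall n, Fs n -> R) (wG : forall n, Gs n -> R)
  (wF_nonneg : forall n (x : Fs n), 0 <= wF n x)
  (wG_nonneg : forall n (y : Gs n), 0 <= wG n y)
  (eventually_pos : exists N, forall n, (N <= n)%nat ->
      0 < egf_coef wF n /\ 0 < egf_coef wG n)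
  (rhoG : R) (rhoG_pos : 0 < rhoG)
  (rhoG_radius : radius_of_convergence (egf_coef wG) rhoG)
  (ratio_lim : Un_cv (fun n => egf_coef wG n / egf_coef wG (S n)) rhoG)
  (Grho : R) (Grho_val : series_value (egf_coef wG) rhoG Grho)
  (conv_lim : Un_cv (fun n => cauchy_coef (egf_coef wG) (egf_coef wG) n / egf_coef wG n)
                    (2 * Grho))
  (f_little_o_g : Un_cv (fun n => egf_coef wF n / egf_coef wG n) 0) :
  exists Frho : R,
    series_value (egf_coef wF) rhoG Frho /\
    Un_cv (fun n => cauchy_coef (egf_coef wF) (egf_coef wG) n / (Frho * egf_coef wG n)) 1 /\
    Fcomponent_converges_to_boltzmann wF wG rhoG Frho.
Proof.
have [N HN] := eventually_pos.
pose f := egf_coef wF; pose g := egf_coef wG.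
have fact_pos : forall k, 0 < INR (Factorial.fact k).
  by move=> k; apply: INR_fact_lt_0.
have f0 : forall n, 0 <= f n.
  move=> n; rewrite /f /egf_coef /Rdiv; apply: Rmult_le_pos.
    by apply: rsum_ge0.
  by apply: Rlt_le; apply: Rinv_0_lt_compat.
have g0 : forall n, 0 <= g n.
  move=> n; rewrite /g /egf_coef /Rdiv; apply: Rmult_le_pos.
    by apply: rsum_ge0.
  by apply: Rlt_le; apply: Rinv_0_lt_compat.
have gp : forall n, (N <= n)%coq_nat -> 0 < g n.
  by move=> n Hn; case: (HN n ltac:(lia)).
have [F HF] := series_ex f g rhoG Grho N g0 gp rhoG_pos f_little_o_g Grho_val.
have Fpos : 0 < F.
  apply: (series_pos f rhoG F N f0 _ rhoG_pos HF).
  by case: (HN N (leqnn N)).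
have Hkey := key g rhoG (2 * Grho) N g0 gp ratio_lim conv_lim.
have HfF := Hkey f F f_little_o_g HF.
exists F; split; first exact: HF.
split.
  have := CV_mult _ _ _ _ HfF (cv_const (/ F)).
  rewrite Rinv_r; last lra.
  apply: cv_ext_ev; exists 0%nat => n _.
  by rewrite /f /g /Rdiv Rinv_mult ?RmultE ?RinvE; ring.
move=> h [M HM].
pose a := fun k => rsum (fun x : Fs k => wF k x * h k x) / INR (Factorial.fact k).
have Hag : Un_cv (fun n => a n / g n) 0.
  apply: (cv_smallo _ (fun n => f n / g n) M) f_little_o_g.
  exists N => n Hn.
  have Hgn := gp n Hn.
  rewrite /a /f /egf_coef /Rdiv !Rabs_mult (Rabs_right (/ g n)); last first.
    by apply: Rle_ge; apply: Rlt_le; apply: Rinv_0_lt_compat.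
  rewrite (Rabs_right (/ INR _)); last first.
    by apply: Rle_ge; apply: Rlt_le; apply: Rinv_0_lt_compat.
  rewrite (Rabs_right (rsum (wF n))); last by apply: Rle_ge; apply: rsum_ge0.
  have Hb := rsum_abs_bound _ (wF n) (h n) M (wF_nonneg n) (HM n).
  have Hi1 : 0 < / INR (Factorial.fact n) by apply: Rinv_0_lt_compat.
  have Hi2 : 0 < / g n by apply: Rinv_0_lt_compat.
  have := Rmult_le_compat_r _ _ _ (Rlt_le _ _ Hi1) Hb.
  move=> H1; have := Rmult_le_compat_r _ _ _ (Rlt_le _ _ Hi2) H1.
  move=> H; apply: (Rle_trans _ _ _ H); apply: Req_le.
  change (M * rsum (wF n) * / INR (Factorial.fact n) * / g n = M * (rsum (wF n) * / INR (Factorial.fact n) * / g n)).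
  by rewrite !Rmult_assoc.
have [A HA] := series_ex a g rhoG Grho N g0 gp rhoG_pos Hag Grho_val.
have HaA := Hkey a A Hag HA.
exists (Rmult A (Rinv F)); split.
  rewrite /boltzmann_expectation.
  have E : forall m, rsum (fun x : Fs m => h m x * (wF m x * rhoG ^ m / (INR (Factorial.fact m) * F)))
            = a m * rhoG ^ m * / F.
    move=> m; rewrite rsum_scale2.
    by rewrite /a /Rdiv Rinv_mult ?RmultE ?RinvE; ring.
  have HA' : Un_cv (sum_f_R0 (fun n => a n * rhoG ^ n)) A := HA.
  have := CV_mult _ _ _ _ HA' (cv_const (/ F)).
  apply: cv_ext_ev; exists 0%nat => n _.
  rewrite Rmult_comm scal_sum; apply: PartSum.sum_eq => i _; by rewrite E.
have Hinv : Un_cv (fun n => / (cauchy_coef f g n / g n)) (/ F).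
  apply/is_lim_seq_Reals.
  have := is_lim_seq_inv _ (Rbar.Finite F) (proj2 (is_lim_seq_Reals _ _) HfF).
  by move=> H; apply: H => [] [] /=; lra.
have := CV_mult _ _ _ _ HaA Hinv.
apply: cv_ext_ev; exists N => n Hn.
have Hgn := gp n Hn.
rewrite /Fcomponent_expectation numer FG_total_eq -/f -/g -/a.
rewrite /Rdiv !Rinv_mult Rinv_inv.
have Hg' : g n <> 0 by lra.
have Hf' : INR (Factorial.fact n) <> 0 by apply: Rgt_not_eq; exact: fact_pos.
rewrite /g in Hg'.
case: (Req_dec (cauchy_coef f g n) 0) => Hc.
  by rewrite Hc Rinv_0 !Rmult_0_l !Rmult_0_r.
move: Hg' Hf' Hc; rewrite ?RmultE ?RinvE => /eqP Hg' /eqP Hf' /eqP Hc.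
have Hr : rsum (wG n) <> 0.
  by move=> H0; move: Hgn; rewrite /g /egf_coef H0 /Rdiv Rmult_0_l; lra.
move: Hr => /eqP Hr.
by field; rewrite Hr Hf' Hc.
Qed.
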